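(* Let $\mathbb{X}$ be a finite set, $\mathcal{H}_A$ a finite-dimensional Hilbert space, $\{\rho_A^x\}_{x\in\mathbb{X}}$ density operators on $\mathcal{H}_A$, and $\sim$ a neighbouring relationship on density operators such that $\rho_A^x\sim\rho_A^{x'}$ for all $x,x'\in\mathbb{X}$. Let $\mathcal{E}$ be a quantum channel that is $(\epsilon,0)$-differentially private with respect to $\sim$, for some $\epsilon\geq0$. Then, writing $\mathcal{E}(\rho_A)$ for the family $\{\mathcal{E}(\rho_A^x)\}_{x\in\mathbb{X}}$, \[ \mathcal{B}(X\rightarrow A)_{\mathcal{E}(\rho_A)}\leq\mathcal{R}(X\rightarrow A)_{\mathcal{E}(\rho_A)}\leq\epsilon/\ln(2). \]
   Context: All logarithms $\log$ are base 2; $\ln$ is the natural logarithm. A neighbouring relationship is a reflexive and symmetric relation $\sim$ on density operators. For $\epsilon,\delta\geq0$, a quantum channel $\mathcal{E}$ is $(\epsilon,\delta)$-differentially private (w.r.t. $\sim$) if $\operatorname{tr}(M\mathcal{E}(\rho))\leq e^{\epsilon}\operatorname{tr}(M\mathcal{E}(\sigma))+\delta$ for all operators $0\preceq M\preceq I$ and all $\rho\sim\sigma$. For a density operator $\rho$ and positive semi-definite $\sigma$, $\widetilde{D}_\infty(\rho\|\sigma)=\log\inf\{\mu\in\mathbb{R}:\rho\leq\mu\sigma\}$ ($+\infty$ if $\operatorname{supp}\rho\not\subseteq\operatorname{supp}\sigma$). For a family $\{\tau^x\}_{x\in\mathbb{X}}$ of density operators, $\mathcal{B}=\min_{\pi\in\Delta(\mathbb{X})}\max_x\widetilde{D}_\infty(\tau^x\|\sum_{x'}\pi(x')\tau^{x'})$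 (with $\Delta(\mathbb{X})$ the probability mass functions on $\mathbb{X}$) and $\mathcal{R}=\max_{x,x'}\widetilde{D}_\infty(\tau^x\|\tau^{x'})$. *)

(* Defs.v *)
From HB Require Import structures.
From mathcomp Require Import all_boot all_order all_algebra.
From mathcomp Require Import all_classical all_reals all_analysis.
From mathcomp Require Import constructive_ereal ereal exp.
From mathcomp Require Import complex mxtens.

Set Implicit Arguments.
Unset Strict Implicit.
Unset Printing Implicit Defensive.

Import Order.TTheory GRing.Theory Num.Theory.
Local Open Scope ring_scope.
Local Open Scope complex_scope.
Local Open Scope classical_set_scope.

Section QDefs.
Variable R : realType.
Local Notation C := (R[i]).

Definition adjmx m n (A : 'M[C]_(m, n)) : 'M[C]_(n, m) := (map_mx Num.conj A)^T.

Definition psd n (A : 'M[C]_n) : Prop :=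
  adjmx A = A /\ forall v : 'cV[C]_n, 0 <= (adjmx v *m A *m v) 0 0.

Definition loewner n (A B : 'M[C]_n) : Prop := psd (B - A).

Definition density n (rho : 'M[C]_n) : Prop := psd rho /\ \tr rho = 1.

Definition lin_map n m (E : 'M[C]_n -> 'M[C]_m) : Prop :=
  forall (a : C) (A B : 'M[C]_n), E (a *: A + B) = a *: E A + E B.

(* block (i,j) (of size n x n) of a matrix on C^k (x) C^n *)
Definition blockmx k n (X : 'M[C]_(k * n)) (i j : 'I_k) : 'M[C]_n :=
  \matrix_(a, b) X (mxtens_index (i, a)) (mxtens_index (j, b)).

(* ampliation id_k (x) E, acting blockwise *)
Definition ampl k n m (E : 'M[C]_n -> 'M[C]_m) (X : 'M[C]_(k * n)) : 'M[C]_(k * m) :=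
  \matrix_(p, q) E (blockmx X (mxtens_unindex p).1 (mxtens_unindex q).1)
                   (mxtens_unindex p).2 (mxtens_unindex q).2.

Definition completely_positive n m (E : 'M[C]_n -> 'M[C]_m) : Prop :=
  forall (k : nat) (X : 'M[C]_(k * n)), psd X -> psd (ampl E X).

Definition trace_preserving n m (E : 'M[C]_n -> 'M[C]_m) : Prop :=
  forall X : 'M[C]_n, \tr (E X) = \tr X.

Definition quantum_channel n m (E : 'M[C]_n -> 'M[C]_m) : Prop :=
  [/\ lin_map E, completely_positive E & trace_preserving E].

Definition neighbouring n (nb : 'M[C]_n -> 'M[C]_n -> Prop) : Prop :=
  (forall rho, density rho -> nb rho rho) /\
  (forall rho sigma, density rho -> density sigma -> nb rho sigma -> nb sigma rho).

Definition diff_private n m (nb : 'M[C]_n -> 'M[C]_n -> Prop)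
    (E : 'M[C]_n -> 'M[C]_m) (eps delta : R) : Prop :=
  forall (M : 'M[C]_m) (rho sigma : 'M[C]_n),
    psd M -> loewner M 1%:M -> density rho -> density sigma -> nb rho sigma ->
    \tr (M *m E rho) <= (expR eps)%:C * \tr (M *m E sigma) + delta%:C.

Definition log2 (x : R) : R := ln x / ln 2.

Definition Dmax n (rho sigma : 'M[C]_n) : \bar R :=
  if `[< exists mu : R, loewner rho (mu%:C *: sigma) >] then
    (log2 (inf [set mu : R | loewner rho (mu%:C *: sigma)]))%:E
  else +oo%E.

Definition pmf (X : finType) (pi : X -> R) : Prop :=
  (forall x, 0 <= pi x) /\ \sum_(x : X) pi x = 1.

Definition Bquant (X : finType) n (tau : X -> 'M[C]_n) : \bar R :=
  ereal_inf [set ereal_sup (range (fun x => Dmax (tau x)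
                   (\sum_(x' : X) (pi x')%:C *: tau x')))
            | pi in [set pi : X -> R | pmf pi]].

Definition Rquant (X : finType) n (tau : X -> 'M[C]_n) : \bar R :=
  ereal_sup (range (fun p : X * X => Dmax (tau p.1) (tau p.2))).

End QDefs.

(* Main.v *)
Require Import Defs.
From HB Require Import structures.
From mathcomp Require Import all_boot all_order all_algebra.
From mathcomp Require Import all_classical all_reals all_analysis.
From mathcomp Require Import constructive_ereal ereal exp.
From mathcomp Require Import complex mxtens.
From mathcomp Require Import ring.
Local Open Scope complex_scope.
Local Open Scope ring_scope.
Import Order.TTheory GRing.Theory Num.Theory.
Local Open Scope ring_scope.

Lemma polar (C : numClosedFieldType) (qu qw a b : C) : qu \is Num.real -> qw \is Num.real ->
  (qu + qw + a + b) \is Num.real ->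
  (qu + 'i * a + 'i^* * b + 'i^* * ('i * qw)) \is Num.real -> a^* = b.
Proof.
move=> /conj_Creal hu /conj_Creal hw /conj_Creal h1 /conj_Creal h2.
rewrite !rmorphD !rmorphM /= hu hw conjCK conjCi in h1 h2.
have ii : 'i * 'i = -1 :> C by rewrite -expr2 sqrCi.
set X := a^* in h1 h2 *; set Y := b^* in h1 h2.
have E : (X - b) *+ 2 = ((qu + qw + X + Y) - (qu + qw + a + b))
   + 'i * ((qu + - 'i * X + 'i * Y + 'i * (- 'i * qw)) -
           (qu + 'i * a + - 'i * b + - 'i * ('i * qw)))
   + ('i * 'i + 1) * (X - Y + a - b) by ring.
move: E; rewrite h1 h2 ii !subrr addNr mul0r mulr0 !addr0 => /eqP.
by rewrite mulrn_eq0 /= subr_eq0 => /eqP.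
Qed.

Section Q.
Variable R : realType.
Local Notation C := (R[i]).

Lemma adjmxD m n (A B : 'M[C]_(m,n)) : adjmx (A + B) = adjmx A + adjmx B.
Proof. by apply/matrixP=> i j; rewrite !mxE rmorphD. Qed.
Lemma adjmxZ m n a (A : 'M[C]_(m,n)) : adjmx (a *: A) = a^* *: adjmx A.
Proof. by apply/matrixP=> i j; rewrite !mxE rmorphM. Qed.
Lemma adjmxN m n (A : 'M[C]_(m,n)) : adjmx (- A) = - adjmx A.
Proof. by apply/matrixP=> i j; rewrite !mxE rmorphN. Qed.
Lemma adjmxB m n (A B : 'M[C]_(m,n)) : adjmx (A - B) = adjmx A - adjmx B.
Proof. by rewrite adjmxD adjmxN. Qed.
Lemma adjmx0 m n : adjmx (0 : 'M[C]_(m,n)) = 0.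
Proof. by apply/matrixP=> i j; rewrite !mxE rmorph0. Qed.
Lemma adjmxK m n (A : 'M[C]_(m,n)) : adjmx (adjmx A) = A.
Proof. by apply/matrixP=> i j; rewrite !mxE conjCK. Qed.
Lemma adjmxM m n p (A : 'M[C]_(m,n)) (B : 'M[C]_(n,p)) :
  adjmx (A *m B) = adjmx B *m adjmx A.
Proof.
apply/matrixP=> i j; rewrite !mxE rmorph_sum; apply: eq_bigr => k _.
by rewrite !mxE rmorphM mulrC.
Qed.
Lemma adjmx1 n : adjmx (1%:M : 'M[C]_n) = 1%:M.
Proof. by apply/matrixP=> i j; rewrite !mxE conjC_nat eq_sym. Qed.

Lemma normsq_ge0 n (x : 'cV[C]_n) : 0 <= (adjmx x *m x) 0 0.
Proof.
rewrite !mxE; apply: sumr_ge0 => k _; rewrite !mxE mulrC; exact: mul_conjC_ge0.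
Qed.

Lemma normsq_eq0 n (x : 'cV[C]_n) : (adjmx x *m x) 0 0 = 0 -> x = 0.
Proof.
rewrite !mxE => h.
have hge : forall k' : 'I_n, true -> 0 <= (x k' 0)^* * x k' 0.
  by move=> k' _; rewrite mulrC mul_conjC_ge0.
apply/matrixP=> k l; rewrite (ord1 l) [RHS]mxE.
have hs : \sum_(k' < n) (x k' 0)^* * x k' 0 = 0.
  by rewrite -[RHS]h; apply: eq_bigr => k' _; rewrite !mxE.
have /eqP := psumr_eq0P hge hs (i:=k) isT.
by rewrite mulf_eq0 conjC_eq0 orbb => /eqP.
Qed.

Lemma psd_gram k n (A : 'M[C]_(k,n)) : psd (adjmx A *m A).
Proof.
split; first by rewrite adjmxM adjmxK.
move=> v; have -> : adjmx v *m (adjmx A *m A) *m v = adjmx (A *m v) *m (A *m v) by rewrite adjmxM !mulmxA.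
exact: normsq_ge0.
Qed.

Lemma psd_proj n (P : 'M[C]_n) : adjmx P = P -> P *m P = P ->
  psd P /\ psd (1%:M - P).
Proof.
move=> hP hPP; split.
  by rewrite -hPP -{1}hP; apply: psd_gram.
have <- : adjmx (1%:M - P) *m (1%:M - P) = 1%:M - P.
  rewrite adjmxB adjmx1 hP !(mulmxBl, mulmxBr, mul1mx, mulmx1) hPP.
  by rewrite subrr subr0.
exact: psd_gram.
Qed.

Definition Bf {n} (D : 'M[C]_n) (u w : 'cV[C]_n) := (adjmx u *m D *m w) 0 0.

Lemma BDl n (D : 'M[C]_n) (u1 u2 w : 'cV[C]_n) : Bf D (u1 + u2) w = Bf D u1 w + Bf D u2 w.
Proof. by rewrite /Bf adjmxD !mulmxDl mxE. Qed.
Lemma BDr n (D : 'M[C]_n) (u w1 w2 : 'cV[C]_n) : Bf D u (w1 + w2) = Bf D u w1 + Bf D u w2.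
Proof. by rewrite /Bf !mulmxDr mxE. Qed.
Lemma BZl n (D : 'M[C]_n) c (u w : 'cV[C]_n) : Bf D (c *: u) w = c^* * Bf D u w.
Proof. by rewrite /Bf adjmxZ -!scalemxAl mxE. Qed.
Lemma BZr n (D : 'M[C]_n) c (u w : 'cV[C]_n) : Bf D u (c *: w) = c * Bf D u w.
Proof. by rewrite /Bf -!scalemxAr mxE. Qed.
Lemma Be n (D : 'M[C]_n) (i j : 'I_n) : Bf D (delta_mx i 0) (delta_mx j 0) = D i j.
Proof.
rewrite /Bf -colE.
have -> : adjmx (delta_mx i 0 : 'cV[C]_n) = delta_mx 0 i.
  apply/matrixP=> a b; rewrite !mxE (ord1 a) eqxx andbT.
  by rewrite conjC_nat.
by rewrite mxE -rowE mxE.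
Qed.

Lemma herm_of_real n (D : 'M[C]_n) :
  (forall v, Bf D v v \is Num.real) -> adjmx D = D.
Proof.
move=> h; apply/matrixP=> i j; rewrite !mxE.
set u : 'cV[C]_n := delta_mx j 0; set w : 'cV[C]_n := delta_mx i 0.
have eji : D j i = Bf D u w by rewrite Be.
have eij : D i j = Bf D w u by rewrite Be.
rewrite eji eij.
apply: (@polar _ (Bf D u u) (Bf D w w)); rewrite ?h //.
  have -> : Bf D u u + Bf D w w + Bf D u w + Bf D w u = Bf D (u + w) (u + w).
    by rewrite !BDl !BDr; ring.
  exact: h.
have -> : Bf D u u + 'i * Bf D u w + 'i^* * Bf D w u + 'i^* * ('i * Bf D w w)
   = Bf D (u + 'i *: w) (u + 'i *: w).
  by rewrite !BDl !BDr !BZl !BZr; ring.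
exact: h.
Qed.

Lemma psd_of_tr n (D : 'M[C]_n) :
  (forall M, psd M -> loewner M 1%:M -> 0 <= \tr (M *m D)) -> psd D.
Proof.
move=> hD.
have hq : forall v, 0 <= Bf D v v.
  move=> v; have [->|v0] := eqVneq v 0; first by rewrite /Bf mulmx0 mxE.
  set s := (adjmx v *m v) 0 0.
  have s0 : s != 0 by apply/eqP => /normsq_eq0 /eqP; rewrite (negbTE v0).
  have sge : 0 <= s := normsq_ge0 _ v.
  have sc : s^* = s := geC0_conj sge.
  set P := s^-1 *: (v *m adjmx v).
  have hvv : adjmx v *m v = s%:M by rewrite [LHS]mx11_scalar.
  have hP : adjmx P = P.
    by rewrite /P adjmxZ adjmxM adjmxK fmorphV; congr (_^-1 *: _); exact: sc.
  have hPP : P *m P = P.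
    rewrite /P -scalemxAl -scalemxAr scalerA mulmxA -(mulmxA v) hvv mul_mx_scalar.
    by rewrite -scalemxAl scalerA -mulrA mulVf // mulr1.
  have [psdP psd1P] := psd_proj _ _ hP hPP.
  have := hD P psdP psd1P.
  rewrite /P -scalemxAl mxtraceZ -mulmxA mxtrace_mulC trace_mx11 => h.
  have -> : Bf D v v = s * (s^-1 * Bf D v v) by rewrite mulrA mulfV // mul1r.
  exact: mulr_ge0.
split; last exact: hq.
by apply: herm_of_real => v; apply: ger0_real.
Qed.

Lemma Dmax_bound m (A B : 'M[C]_m) (eps : R) : 0 <= eps ->
  loewner A ((expR eps)%:C *: B) -> (Dmax A B <= (eps / ln 2)%:E)%E.
Proof.
move=> he hl; rewrite /Dmax asboolT; last by exists (expR eps).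
rewrite lee_fin /log2.
have l2 : 0 < ln (2 : R) by apply: ln_gt0; rewrite ltr1n.
apply: ler_wpM2r; first by rewrite invr_ge0 ltW.
set S := [set mu : R | loewner A (mu%:C *: B)]%classic.
have [hinf|hinf] := lerP (inf S) 0; first by rewrite ln0.
have hlb : has_lbound S.
  apply/not_notP => hn; move: hinf; rewrite inf_out ?ltxx //.
  by case.
have : inf S <= expR eps by apply: ge_inf.
rewrite -ler_ln ?posrE ?expR_gt0 // expRK //.
Qed.

Lemma dp_loewner n m (E : 'M[C]_n -> 'M[C]_m) nb (eps : R) rho sigma :
  diff_private nb E eps 0 -> density rho -> density sigma -> nb rho sigma ->
  loewner (E rho) ((expR eps)%:C *: E sigma).
Proof.
move=> hdp hr hs hn; apply: psd_of_tr => M hM hM1.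
have := hdp M rho sigma hM hM1 hr hs hn.
have -> : (0 : R)%:C = 0 by [].
rewrite addr0 mulmxBr -scalemxAr linearB /= mxtraceZ subr_ge0 //.
Qed.

End Q.

Theorem proposition6 (R : realType) (X : finType) (x0 : X) (n m : nat)
    (rho : X -> 'M[R[i]]_n) (nb : 'M[R[i]]_n -> 'M[R[i]]_n -> Prop)
    (E : 'M[R[i]]_n -> 'M[R[i]]_m) (eps : R) :
  (forall x, density (rho x)) ->
  neighbouring nb ->
  (forall x x', nb (rho x) (rho x')) ->
  quantum_channel E ->
  0 <= eps ->
  diff_private nb E eps 0 ->
  (Bquant (fun x => E (rho x)) <= Rquant (fun x => E (rho x)))%E /\
  (Rquant (fun x => E (rho x)) <= (eps / ln 2)%:E)%E.
Proof.
move=> hden _ hnb _ he hdp; split; last first.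
  apply: ge_ereal_sup => _ [[x x'] _ <-] /=.
  by apply: Dmax_bound => //; apply: dp_loewner hdp _ _ _.
pose pd := fun x : X => ((x == x0)%:R : R).
have hpd : Defs.pmf pd.
  split; first by move=> x; rewrite /pd ler0n.
  by rewrite (bigD1 x0) //= /pd eqxx big1 ?addr0 // => y /negbTE ->.
have hsum : \sum_(x' : X) (pd x')%:C *: E (rho x') = E (rho x0).
  rewrite (bigD1 x0) //= /pd eqxx big1 ?addr0; first by rewrite scale1r.
  by move=> y /negbTE ->; rewrite scale0r.
have h1 : (Bquant (fun x => E (rho x)) <=
    ereal_sup (range (fun x => Dmax (E (rho x)) (E (rho x0)))))%E.
  rewrite /Bquant; apply: ereal_inf_lbound; exists pd; first exact: hpd.
  by rewrite hsum.
have h2 : (ereal_sup (range (fun x => Dmax (E (rho x)) (E (rho x0)))) <=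
    Rquant (fun x => E (rho x)))%E.
  by apply: ereal_sup_le => _ [x _ <-]; exists (x, x0).
exact: le_trans h1 h2.
Qed.
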